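(* Let $\Sigma=\{0,1\}$ and $D=\Sigma(\Sigma\Sigma)^*\setminus\left(\Sigma^*11\Sigma^*\cup000\Sigma^*\cup101\Sigma^*\right)$. A map $f:\mathbb{Z}\to D$ is an increasing bijection from $(\mathbb{Z},<)$ to $(D,\prec)$ with $f(0)=0$ (the one-letter word) if and only if $f=\mathrm{rep}_{\mathcal{F}c}$.
   Context: Fibonacci numbers: $F_0=1$, $F_1=2$, $F_n=F_{n-1}+F_{n-2}$ for $n\ge2$. For a nonempty binary word $w=w_{k-1}\cdots w_0$ (digits indexed from the right), $\mathrm{val}_{\mathcal{F}c}(w)=\sum_{i=0}^{k-1}w_iF_i-w_{k-1}F_k$. $\mathrm{rep}_{\mathcal{F}c}(n)$ denotes the unique $w\in D$ with $\mathrm{val}_{\mathcal{F}c}(w)=n$ (this restriction of $\mathrm{val}_{\mathcal{F}c}$ to $D$ is a bijection onto $\mathbb Z$). Order: $u<_{rad}v$ iff $|u|<|v|$, or $|u|=|v|$ and $u<_{lex}v$; $u<_{rev}v$ iff $|u|>|v|$, or $|u|=|v|$ and $u<_{lex}v$. The total order $\prec$ on $\Sigma^*$: $u\prec v$ iff either $u\in1\Sigma^*$ and $v\in0\Sigma^*$; or $u,v\in0\Sigma^*$ and $u<_{rad}v$; or $u,v\in1\Sigma^*$ and $u<_{rev}v$. *)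

(* Defs.v *)
From mathcomp Require Import all_boot all_order all_algebra.
Set Implicit Arguments. Unset Strict Implicit. Unset Printing Implicit Defensive.
Import Order.TTheory GRing.Theory Num.Theory.

(* Words over Sigma = {0,1} are [seq bool] (false = 0, true = 1), written
   left to right: the word w_{k-1} ... w_0 is [:: w_{k-1}; ...; w_0]. *)
Definition word := seq bool.

Fixpoint Fib (n : nat) : nat :=
  match n with
  | 0 => 1
  | 1 => 2
  | (m.+1 as p).+1 => Fib p + Fib m
  end.

(* w_i = digit of index i counted from the right. *)
Definition digit (w : word) (i : nat) : bool := nth false (rev w) i.

Definition valFc (w : word) : int :=
  ((\sum_(i < size w) (digit w i : nat) * Fib i)%N)%:Z
  - ((head false w : nat) * Fib (size w))%N%:Z.

Fixpoint has11 (w : word) : bool :=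
  match w with
  | [::] => false
  | a :: t => (a && head false t) || has11 t
  end.

Definition inD (w : word) : bool :=
  [&& odd (size w), ~~ has11 w,
      ~~ prefix [:: false; false; false] w
    & ~~ prefix [:: true; false; true] w].

Fixpoint lexlt (u v : word) : bool :=
  match u, v with
  | [::], [::] => false
  | [::], _ :: _ => true
  | _ :: _, [::] => false
  | a :: u', b :: v' => (~~ a && b) || ((a == b) && lexlt u' v')
  end.

Definition radlt (u v : word) : bool :=
  (size u < size v)%N || ((size u == size v) && lexlt u v).

Definition revlt (u v : word) : bool :=
  (size u > size v)%N || ((size u == size v) && lexlt u v).

Definition starts_with (b : bool) (u : word) : bool :=
  if u is a :: _ then a == b else false.

Definition prec (u v : word) : bool :=
  [|| starts_with true u && starts_with false v,
      [&& starts_with false u, starts_with false v & radlt u v]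
    | [&& starts_with true u, starts_with true v & revlt u v]].

(* f is the map rep_Fc: for every n, f n is the (unique) word of D
   whose val_Fc is n. *)
Definition is_repFc (f : int -> word) : Prop :=
  forall n : int, inD (f n) /\ valFc (f n) = n.

Definition increasing_bij_onto_D (f : int -> word) : Prop :=
  [/\ (forall n, inD (f n)),
      (forall w, inD w -> exists n, f n = w),
      injective f
    & (forall m n : int, (m < n)%R -> prec (f m) (f n))].

(* Main.v *)
Require Import Defs.
From mathcomp Require Import all_boot all_order all_algebra.
From mathcomp Require Import zify.
Set Implicit Arguments. Unset Strict Implicit. Unset Printing Implicit Defensive.
Import Order.TTheory GRing.Theory Num.Theory.

Fixpoint Zr (w : word) : nat := if w is a :: t then (a : nat) * Fib (size t) + Zr t else 0.

Lemma FibSS n : Fib n.+2 = Fib n.+1 + Fib n. Proof. by []. Qed.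
Lemma Fib0 : Fib 0 = 1. Proof. by []. Qed.
Lemma Fib1 : Fib 1 = 2. Proof. by []. Qed.
Arguments Fib : simpl never.

Lemma Fib_mono n : Fib n <= Fib n.+1.
Proof. case: n => [|n]; first by rewrite Fib0 Fib1. rewrite FibSS; lia. Qed.

Lemma Fib_le m n : m <= n -> Fib m <= Fib n.
Proof.
elim: n => [|n IH]; first by rewrite leqn0 => /eqP->.
rewrite leq_eqVlt => /orP [/eqP->//|]. rewrite ltnS => /IH H.
exact: leq_trans H (Fib_mono n).
Qed.

Lemma Fib_gt n : n < Fib n.
Proof.
elim: n => [|n IH]; first by rewrite Fib0. case: n IH => [|n] IH; first by rewrite Fib1. rewrite FibSS.
have H0 : 0 < Fib n := Fib_le (leq0n n). lia.
Qed.

Lemma Fib2 s : Fib s.+1 <= Fib s + Fib s.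
Proof. case: s => [|s]; first by rewrite Fib0 Fib1. rewrite FibSS. have := Fib_mono s. lia. Qed.

Lemma gmono s' s : s' <= s -> Fib s'.+1 + Fib s <= Fib s.+1 + Fib s'.
Proof.
elim: s => [|s IH]; first by rewrite leqn0 => /eqP->.
rewrite leq_eqVlt => /orP [/eqP->//|]. rewrite ltnS => /IH H.
have := Fib2 s. rewrite FibSS. lia.
Qed.

Lemma sumZ w : (\sum_(i < size w) (digit w i : nat) * Fib i)%N = Zr w.
Proof.
elim: w => [|a t IH]; first by rewrite big_ord0.
rewrite /= big_ord_recr /= -IH addnC; congr (_ + _).
- by rewrite /digit rev_cons nth_rcons size_rev ltnn eqxx.
- apply: eq_bigr => i _; by rewrite /digit rev_cons nth_rcons size_rev ltn_ord.
Qed.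

Lemma valE w : valFc w = ((Zr w)%:Z - ((head false w : nat) * Fib (size w))%:Z)%R.
Proof. by rewrite /valFc sumZ. Qed.

Lemma bound_aux n w : size w <= n -> ~~ has11 w -> Zr w < Fib (size w).
Proof.
elim: n w => [|n IH] [|a t] //= Hs Hh.
case: a Hh => /= Hh.
- case: t Hs Hh => [|b t] //= Hs Hh.
  case: b Hh => //= Hh.
  have := IH t ltac:(lia) Hh. rewrite FibSS. lia.
- have := IH t ltac:(lia) Hh. have := Fib_mono (size t). lia.
Qed.

Lemma bound w : ~~ has11 w -> Zr w < Fib (size w).
Proof. exact: bound_aux. Qed.

Lemma no11_tl a t : ~~ has11 (a :: t) -> ~~ has11 t.
Proof. by rewrite /= negb_or => /andP[]. Qed.

Lemma lexZ u v : size u = size v -> ~~ has11 u -> ~~ has11 v -> lexlt u v -> Zr u < Zr v.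
Proof.
elim: u v => [|a u IH] [|b v] // [Hs] Hu Hv /=.
have Hu' := no11_tl Hu; have Hv' := no11_tl Hv.
case/orP => [/andP [Ha Hb] | /andP [/eqP Hab Hl]].
- move: Ha Hb; case: a {Hu} => // _; case: b {Hv} => // _ /=.
  have := bound Hu'. rewrite Hs. lia.
- subst b. have := IH v Hs Hu' Hv' Hl. rewrite Hs. case: (a : nat) => /= *; lia.
Qed.

Lemma lex_total u v : size u = size v -> u != v -> lexlt u v || lexlt v u.
Proof.
elim: u v => [|a u IH] [|b v] // [Hs] /=.
case: a; case: b => //= H; apply: IH => //; apply: contra H => /eqP-> //.
Qed.

Lemma odd_lt m n : odd m -> odd n -> m < n -> m.+2 <= n.
Proof.
move=> Om On Hlt. have: n != m.+1 by apply/eqP=> E; move: On; rewrite E /= Om.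
move/eqP. lia.
Qed.

Lemma inD_nil : inD [::] = false. Proof. by []. Qed.

Lemma inD0 t : inD (false :: t) ->
  t = [::] \/ exists c d t', [/\ t = c :: d :: t', c || d & ~~ has11 t'].
Proof.
case: t => [|c [|d t']]; first by left.
- by case/and4P.
- move=> /and4P [_ Hh Hp _]; right; exists c, d, t'; split => //.
  + by move: Hp; clear Hh; case: c; case: d => //=; case: t'.
  + by move: Hh => /no11_tl /no11_tl /no11_tl.
Qed.

Lemma inD1 t : inD (true :: t) ->
  t = [::] \/ exists t', t = false :: false :: t' /\ ~~ has11 t'.
Proof.
case: t => [|c [|d t']]; first by left.
- by case/and4P.
- move=> /and4P [_ Hh _ Hp]; right; exists t'.
  move: Hh Hp; case: c => //; case: d => /=; first by case: t'.
  move=> Hh _; split=>//; by move: Hh; rewrite negb_or => /andP[].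
Qed.

Lemma inD_no11 w : inD w -> ~~ has11 w.
Proof. by case/and4P. Qed.

Lemma inD_odd w : inD w -> odd (size w).
Proof. by case/and4P. Qed.

Lemma precA u v : inD u -> inD v -> prec u v -> (valFc u < valFc v)%R.
Proof.
case: u => [|a u']; first by rewrite inD_nil.
case: v => [|b v']; first by rewrite inD_nil.
move=> Du Dv; have Hu := inD_no11 Du; have Hv := inD_no11 Dv.
have Ou := inD_odd Du; have Ov := inD_odd Dv.
have Bu := bound Hu; have Bv := bound Hv.
have Hu' := no11_tl Hu. have Bu' := bound Hu'.
rewrite !valE.
case: a Du Hu Ou Bu => Du Hu Ou Bu; case: b Dv Hv Ov Bv => Dv Hv Ov Bv;
  rewrite /prec /radlt /revlt /= ?orbF; rewrite /= in Bu Bv.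
-
  case/orP => [Hlt | /andP [/eqP Hs Hl]].
  + case: (inD1 Du) => [E | [t [E Ht]]]; first by subst u'; move: Hlt; rewrite /=; lia.
    subst u'. have Bt := bound Ht. move: Hlt; rewrite /= => Hlt.
    have Hodd := odd_lt Ov Ou Hlt. move: Hodd => /= Hodd.
    have G := @gmono (size v') (size t) ltac:(lia).
    have E1 := FibSS (size t).+1; have E2 := FibSS (size t). lia.
  + have H := @lexZ (true::u') (true::v') Hs Hu Hv; move: H; rewrite /= Hl => /(_ isT) H.
    move: Hs => [Hs']; rewrite Hs' in H *; lia.
- move=> _. have E1 := FibSS (size u'). lia.
- by [].
- case/orP => [Hlt | /andP [/eqP Hs Hl]].
  + case: (inD0 Dv) => [E | [c [d [t [E Hcd Ht]]]]]; first by subst v'; move: Hlt; rewrite /=; lia.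
    subst v'. have Hodd := odd_lt Ou Ov Hlt. move: Hodd => /= Hodd.
    have F := @Fib_le (size u') (size t) ltac:(lia).
    have M1 := Fib_mono (size t).
    move: Hcd; clear -Bu' Hodd F M1; case: c; case: d => //= _; lia.
  + have H := @lexZ (false::u') (false::v') Hs Hu Hv; move: H; rewrite /= Hl => /(_ isT) H.
    lia.
Qed.

Lemma prec_total u v : inD u -> inD v -> u != v -> prec u v || prec v u.
Proof.
case: u => [|a u']; first by rewrite inD_nil.
case: v => [|b v']; first by rewrite inD_nil.
move=> _ _ Hne.
rewrite /prec /radlt /revlt.
case: a Hne; case: b => Hne /=; rewrite ?orbF //=;
  (have Hne' : u' != v' by apply: contra Hne => /eqP->);
  rewrite !ltnS !eqSS; case: (ltngtP (size u') (size v')) => Hc; rewrite ?orbT //;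
  have L := lex_total Hc Hne'; rewrite ?Hc ?eqxx /=;
  by move: L; case: (lexlt u' v'); case: (lexlt v' u'); rewrite ?orbT.
Qed.

Lemma val_inj u v : inD u -> inD v -> valFc u = valFc v -> u = v.
Proof.
move=> Du Dv Hv; apply/eqP; apply/negPn/negP => Hne.
case/orP: (prec_total Du Dv Hne) => /precA H.
- by move: (H Du Dv); rewrite Hv ltxx.
- by move: (H Dv Du); rewrite Hv ltxx.
Qed.

Lemma zeck m : forall N, N < Fib m -> exists w, [/\ size w = m, ~~ has11 w & Zr w = N].
Proof.
elim/ltn_ind: m => m IH N HN.
case: m IH HN => [|[|m]] IH HN.
- exists [::]; split => //=. move: HN; rewrite Fib0; lia.
- move: HN; rewrite Fib1 => HN. exists [:: N == 1]; split => //=.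
  - by rewrite andbF.
  - rewrite Fib0; case: N HN => [|[|N]] //.
- have E := FibSS m.
  case: (ltnP N (Fib m.+1)) => HN1.
  + have [w [Hs Hh Hz]] := IH m.+1 (ltnSn _) N HN1.
    exists (false :: w); split => //=; by rewrite Hs.
  + have [w [Hs Hh Hz]] := IH m (leqnSn _) (N - Fib m.+1) ltac:(lia).
    exists [:: true, false & w]; split => //=; rewrite Hs //; lia.
Qed.

Lemma pos_rep j : forall n, n < Fib (j.*2) -> exists w, inD w /\ valFc w = Posz n.
Proof.
elim: j => [|j IH] n Hn.
- exists [:: false]; split => //. move: Hn; rewrite Fib0 => Hn.
  rewrite valE /=. have -> : n = 0 by lia. by [].
- case: (ltnP n (Fib j.*2)) => Hn1; first exact: IH.
  rewrite doubleS in Hn.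
  have [u [Hs Hh Hz]] := zeck Hn.
  exists (false :: u); split; last by rewrite valE /= Hz; lia.
  rewrite /inD /= Hs /= odd_double Hh /=.
  case: u Hs Hh Hz => [|c [|d u']] //= Hs Hh Hz.
  case: c Hh Hz; case: d => //= Hh Hz.
  have := bound Hh. move: Hs => [->]. lia.
Qed.

Lemma neg_rep j : forall n, 0 < n <= Fib (j.*2.+1) -> exists w, inD w /\ valFc w = (- Posz n)%R.
Proof.
elim: j => [|j IH] n /andP [Hn0 Hn].
- move: Hn; rewrite Fib1 => Hn.
  case: n Hn0 Hn => [|[|[|n]]] // _ _.
  + exists [:: true]; split => //. rewrite valE /=. by [].
  + exists [:: true; false; false]; split => //. rewrite valE /=. by [].
- case: (leqP n (Fib j.*2.+1)) => Hn1; first by apply: IH; rewrite Hn0.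
  rewrite doubleS in Hn.
  have E1 := FibSS (j.*2.+1). have E2 := FibSS (j.*2.+2). have E3 := FibSS (j.*2.+3).
  have [u [Hs Hh Hz]] := @zeck (j.*2.+2) (Fib j.*2.+3 - n) ltac:(lia).
  exists [:: true, false, false & u]; split.
  + by rewrite /inD /= Hs /= odd_double Hh.
  + rewrite valE /= Hs Hz. lia.
Qed.

Lemma rep_exists z : exists w, inD w /\ valFc w = z.
Proof.
case: z => n.
- apply: (@pos_rep n). have := Fib_gt (n.*2). lia.
- rewrite NegzE. apply: (@neg_rep n). have := Fib_gt (n.*2.+1). lia.
Qed.

Lemma incr_surj_id (h : int -> int) :
  (forall m n, (m < n)%R -> (h m < h n)%R) -> (forall n, exists m, h m = n) ->
  h 0%R = 0%R -> forall n, h n = n.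
Proof.
move=> Hm Hs H0.
have step a : h (a + 1)%R = (h a + 1)%R.
  have [m Hmv] := Hs (h a + 1)%R.
  have [Hc|[Hc|[Hc|Hc]]] : (m < a \/ m = a \/ m = a + 1 \/ a + 1 < m)%R by lia.
  - have := Hm _ _ Hc. lia.
  - subst m. lia.
  - by subst m.
  - have := Hm _ _ Hc. have := Hm a (a+1)%R ltac:(lia). lia.
have Hp k : h (Posz k) = (Posz k).
  elim: k => [|k IH] //. by rewrite -addn1 PoszD step IH.
have Hn k : h (- (Posz k))%R = (- (Posz k))%R.
  elim: k => [|k IH]; first by rewrite oppr0.
  have := step (- (Posz k.+1))%R.
  rewrite (_ : (- (Posz k.+1) + 1 = - (Posz k))%R); last by lia.
  rewrite IH. lia.
case => k; first exact: Hp.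
by rewrite NegzE Hn.
Qed.

Theorem mainTheorem3 (f : int -> word) :
  (increasing_bij_onto_D f /\ f 0%R = [:: false]) <-> is_repFc f.
Proof.
split.
- move=> [[HD Hsurj Hinj Hmono] H0].
  have Hid := @incr_surj_id (fun n => valFc (f n)).
  move=> n; split; first exact: HD.
  apply: Hid.
  + move=> a b Hab. exact: precA (HD a) (HD b) (Hmono a b Hab).
  + move=> z. have [w [Dw Vw]] := rep_exists z. have [m Hm] := Hsurj w Dw.
    by exists m; rewrite Hm.
  + by rewrite H0 valE.
- move=> Hrep.
  have HD n : inD (f n) by case: (Hrep n).
  have HV n : valFc (f n) = n by case: (Hrep n).
  split; first split.
  + exact: HD.
  + move=> w Dw; exists (valFc w). apply: val_inj; [exact: HD | exact: Dw | exact: HV].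
  + move=> a b Hab. by rewrite -(HV a) -(HV b) Hab.
  + move=> a b Hab.
    have Hne : f a != f b.
      apply/eqP => E. have : valFc (f a) = valFc (f b) by rewrite E.
      rewrite !HV => E'. by move: Hab; rewrite E' ltxx.
    case/orP: (prec_total (HD a) (HD b) Hne) => // /precA H.
    have := H (HD b) (HD a). rewrite !HV => Hba. exfalso. move: Hab Hba. lia.
  + apply: val_inj; [exact: HD | by [] | by rewrite HV valE].
Qed.
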